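(* Let $v$ be a weight on $[0,1)$. For each $t\in[0,1)$ the operator $C_t\colon H^\infty_v\to H^\infty_v$ is continuous. Moreover, $\|C_0\|_{H^\infty_v\to H^\infty_v}=1$ and $$1\le \|C_t\|_{H^\infty_v\to H^\infty_v}\le -\frac{\log(1-t)}{t},\qquad t\in(0,1).$$
   Context: $\mathbb{D}=\{z\in\mathbb{C}:|z|<1\}$ and $H(\mathbb{D})$ is the space of holomorphic functions on $\mathbb{D}$. A weight is a continuous non-increasing function $v\colon[0,1)\to(0,\infty)$, extended to $\mathbb{D}$ by $v(z):=v(|z|)$. $H^\infty_v=\{f\in H(\mathbb{D}):\|f\|_{\infty,v}:=\sup_{z\in\mathbb{D}}|f(z)|v(z)<\infty\}$ with norm $\|\cdot\|_{\infty,v}$. For $t\in[0,1]$ the generalized Cesàro operator $C_t$ is defined on $f\in H(\mathbb{D})$ by $C_tf(0)=f(0)$ and $C_tf(z)=\frac{1}{z}\int_0^z\frac{f(\xi)}{1-t\xi}\,d\xi$ for $z\in\mathbb{D}\setminus\{0\}$. *)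

(* Defs.v *)
From Stdlib Require Import Reals.
From Coquelicot Require Import Coquelicot.
Open Scope R_scope.

(* A weight: continuous non-increasing v : [0,1) -> (0,oo), given as a
   function R -> R whose values outside [0,1) are irrelevant. *)
Definition is_weight (v : R -> R) : Prop :=
  (forall r, 0 <= r < 1 -> 0 < v r) /\
  (forall r s, 0 <= r -> r <= s -> s < 1 -> v s <= v r) /\
  (forall r, 0 <= r < 1 ->
     filterlim v (within (fun x => 0 <= x < 1) (locally r)) (locally (v r))).

Definition in_disc (z : C) : Prop := Cmod z < 1.

Definition holo_disc (f : C -> C) : Prop :=
  forall z, in_disc z -> @ex_derive C_AbsRing C_NormedModule f z.

Definition in_Hv (v : R -> R) (f : C -> C) : Prop :=
  holo_disc f /\ exists M, forall z, in_disc z -> Cmod (f z) * v (Cmod z) <= M.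

Definition normv (v : R -> R) (f : C -> C) : R :=
  real (Lub_Rbar (fun x => exists z, in_disc z /\ x = Cmod (f z) * v (Cmod z))).

Definition CRInt01 (g : R -> C) : C :=
  (RInt (fun s => Re (g s)) 0 1, RInt (fun s => Im (g s)) 0 1).

(* Line integral int_0^z h(xi) d xi along the segment [0,z], xi = s z. *)
Definition seg_int (h : C -> C) (z : C) : C :=
  Cmult z (CRInt01 (fun s => h (Cmult (RtoC s) z))).

Definition cesaro (t : R) (f : C -> C) (z : C) : C :=
  if Req_EM_T (Cmod z) 0 then f (RtoC 0)
  else Cmult (Cinv z)
         (seg_int (fun xi => Cdiv (f xi) (Cminus (RtoC 1) (Cmult (RtoC t) xi))) z).

Definition cesaro_opnorm (v : R -> R) (t : R) : Rbar :=
  Lub_Rbar (fun x => exists f, in_Hv v f /\ normv v f <= 1 /\ x = normv v (cesaro t f)).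

(* Main.v *)
Require Import Defs.
From Stdlib Require Import Reals Lra Lia.
From Coquelicot Require Import Coquelicot.
Open Scope R_scope.

Definition Cdiff (h : C -> C) (z l : C) : Prop :=
  forall eps, 0 < eps -> exists delta, 0 < delta /\
    forall w, Cmod (w - z)%C < delta ->
      Cmod ((h w - h z) - (w - z) * l)%C <= eps * Cmod (w - z)%C.

Lemma is_derive_Cdiff h z l : @is_derive C_AbsRing C_NormedModule h z l -> Cdiff h z l.
Proof.
  intros [_ Hd] eps Heps.
  specialize (Hd z (fun P H => H) (mkposreal eps Heps)).
  destruct Hd as [d Hd].
  exists d. split. apply cond_pos. intros w Hw. exact (Hd w Hw).
Qed.

Lemma Cdiff_is_derive h z l : Cdiff h z l -> @is_derive C_AbsRing C_NormedModule h z l.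
Proof.
  intros H. split. apply is_linear_scal_l.
  intros x Hx. apply is_filter_lim_locally_close in Hx.
  assert (Hxz : x = z).
  { assert (H0 : Cmod (x - z)%C = 0).
    { destruct (Rle_lt_or_eq_dec 0 _ (Cmod_ge_0 (x - z)%C)) as [Hp|Hp]; [|auto].
      specialize (Hx (mkposreal _ Hp)). exfalso. simpl in Hx. 
      change (Cmod (x - z)%C < Cmod (x - z)%C) in Hx. lra. }
    apply Cmod_eq_0 in H0. apply Ceq_minus in H0. exact H0. }
  subst x.
  intros eps.
  destruct (H eps (cond_pos eps)) as [d [Hd H']].
  exists (mkposreal d Hd). intros y Hy. apply H'. exact Hy.
Qed.

Lemma holo_Cdiff f z : holo_disc f -> in_disc z -> exists l, Cdiff f z l.
Proof.
  intros H Hz. destruct (H z Hz) as [l Hl]. exists l. now apply is_derive_Cdiff.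
Qed.

Lemma Cmod_sub_tri a b c : Cmod (a - c)%C <= Cmod (a - b)%C + Cmod (b - c)%C.
Proof.
  replace (a - c)%C with ((a - b) + (b - c))%C by ring. apply Cmod_triangle.
Qed.

Lemma Cmod_sym a b : Cmod (a - b)%C = Cmod (b - a)%C.
Proof. replace (a - b)%C with (- (b - a))%C by ring. apply Cmod_opp. Qed.

Lemma im_le_Cmod z : Rabs (Im z) <= Cmod z.
Proof. pose proof (Rmax_Cmod z). unfold Im. eapply Rle_trans; [|exact H]. apply Rmax_r. Qed.

Lemma re_le_Cmod' z : Rabs (Re z) <= Cmod z.
Proof. apply re_le_Cmod. Qed.

Lemma Cmod_le_sum z : Cmod z <= Rabs (Re z) + Rabs (Im z).
Proof.
  pose proof (Cmod2_alt z). pose proof (Cmod_ge_0 z).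
  pose proof (Rabs_pos (Re z)). pose proof (Rabs_pos (Im z)).
  rewrite <- (pow2_abs (Re z)), <- (pow2_abs (Im z)) in H.
  nra.
Qed.

Lemma Cmod_RtoC r : 0 <= r -> Cmod (RtoC r) = r.
Proof. intros. rewrite Cmod_R. now apply Rabs_pos_eq. Qed.

Definition CInt (g : R -> C) (a b : R) : C :=
  (RInt (fun s => Re (g s)) a b, RInt (fun s => Im (g s)) a b).

Definition CIok (g : R -> C) (a b : R) : Prop :=
  ex_RInt (fun s => Re (g s)) a b /\ ex_RInt (fun s => Im (g s)) a b.

Lemma CInt_ext f g a b : (forall x, Rmin a b < x < Rmax a b -> f x = g x) -> CInt f a b = CInt g a b.
Proof.
  intros H. unfold CInt. f_equal; apply RInt_ext; intros x Hx; now rewrite H.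
Qed.

Lemma CIok_ext f g a b : (forall x, Rmin a b < x < Rmax a b -> f x = g x) -> CIok f a b -> CIok g a b.
Proof.
  intros H [H1 H2]. split; [eapply ex_RInt_ext; [|exact H1]|eapply ex_RInt_ext; [|exact H2]]; intros x Hx; simpl; now rewrite H.
Qed.

Lemma CIok_plus f g a b : CIok f a b -> CIok g a b -> CIok (fun s => f s + g s)%C a b.
Proof.
  intros [H1 H2] [H3 H4]. split.
  - apply (ex_RInt_plus (V:=R_CompleteNormedModule) _ _ _ _ H1 H3).
  - apply (ex_RInt_plus (V:=R_CompleteNormedModule) _ _ _ _ H2 H4).
Qed.

Lemma CIok_minus f g a b : CIok f a b -> CIok g a b -> CIok (fun s => f s - g s)%C a b.
Proof.
  intros [H1 H2] [H3 H4]. split.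
  - apply (ex_RInt_minus (V:=R_CompleteNormedModule) _ _ _ _ H1 H3).
  - apply (ex_RInt_minus (V:=R_CompleteNormedModule) _ _ _ _ H2 H4).
Qed.

Lemma CInt_plus f g a b : CIok f a b -> CIok g a b ->
  CInt (fun s => f s + g s)%C a b = (CInt f a b + CInt g a b)%C.
Proof.
  intros [H1 H2] [H3 H4]. unfold CInt. apply injective_projections; simpl.
  - exact (RInt_plus (V:=R_CompleteNormedModule) _ _ _ _ H1 H3).
  - exact (RInt_plus (V:=R_CompleteNormedModule) _ _ _ _ H2 H4).
Qed.

Lemma CInt_minus f g a b : CIok f a b -> CIok g a b ->
  CInt (fun s => f s - g s)%C a b = (CInt f a b - CInt g a b)%C.
Proof.
  intros [H1 H2] [H3 H4]. unfold CInt. apply injective_projections; simpl.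
  - exact (RInt_minus (V:=R_CompleteNormedModule) _ _ _ _ H1 H3).
  - exact (RInt_minus (V:=R_CompleteNormedModule) _ _ _ _ H2 H4).
Qed.

Lemma CIok_cmul c g a b : CIok g a b -> CIok (fun s => c * g s)%C a b.
Proof.
  intros [H1 H2]. split.
  - eapply ex_RInt_ext. 2: apply (ex_RInt_minus (V:=R_CompleteNormedModule));
      [apply (ex_RInt_scal (V:=R_CompleteNormedModule) _ _ _ (Re c) H1)|
       apply (ex_RInt_scal (V:=R_CompleteNormedModule) _ _ _ (Im c) H2)].
    intros x _. cbv beta. rewrite re_mult. reflexivity.
  - eapply ex_RInt_ext. 2: apply (ex_RInt_plus (V:=R_CompleteNormedModule));
      [apply (ex_RInt_scal (V:=R_CompleteNormedModule) _ _ _ (Re c) H2)|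
       apply (ex_RInt_scal (V:=R_CompleteNormedModule) _ _ _ (Im c) H1)].
    intros x _. cbv beta. rewrite im_mult. reflexivity.
Qed.

Lemma CInt_cmul c g a b : CIok g a b -> CInt (fun s => c * g s)%C a b = (c * CInt g a b)%C.
Proof.
  intros [H1 H2]. apply injective_projections.
  - change (Re (CInt (fun s => c * g s)%C a b) = Re (c * CInt g a b)%C).
    rewrite re_mult. unfold CInt at 1 2 3. unfold Re at 1 3 5, Im at 2. cbn [fst snd].
    rewrite (RInt_ext _ (fun s => minus (scal (Re c) (Re (g s))) (scal (Im c) (Im (g s))))).
    2:{ intros x _. rewrite <- re_mult. reflexivity. }
    rewrite (RInt_minus (V:=R_CompleteNormedModule)).
    2: apply (ex_RInt_scal (V:=R_CompleteNormedModule) _ _ _ (Re c) H1).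
    2: apply (ex_RInt_scal (V:=R_CompleteNormedModule) _ _ _ (Im c) H2).
    rewrite !(RInt_scal (V:=R_CompleteNormedModule)) by assumption. reflexivity.
  - change (Im (CInt (fun s => c * g s)%C a b) = Im (c * CInt g a b)%C).
    rewrite im_mult. unfold CInt at 1 2 3. unfold Im at 1 3, Re at 2 4. cbn [fst snd].
    rewrite (RInt_ext _ (fun s => plus (scal (Re c) (Im (g s))) (scal (Im c) (Re (g s))))).
    2:{ intros x _. rewrite <- im_mult. reflexivity. }
    rewrite (RInt_plus (V:=R_CompleteNormedModule)).
    2: apply (ex_RInt_scal (V:=R_CompleteNormedModule) _ _ _ (Re c) H2).
    2: apply (ex_RInt_scal (V:=R_CompleteNormedModule) _ _ _ (Im c) H1).
    rewrite !(RInt_scal (V:=R_CompleteNormedModule)) by assumption. reflexivity.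
Qed.


Lemma CInt_const c a b : CInt (fun _ => c) a b = ((b - a) * c)%C.
Proof.
  unfold CInt. rewrite !(RInt_const (V:=R_CompleteNormedModule)).
  apply injective_projections; simpl; unfold scal; simpl; unfold mult, Re, Im; simpl; ring.
Qed.

Lemma CIok_const c a b : CIok (fun _ => c) a b.
Proof. split; apply (ex_RInt_const (V:=R_CompleteNormedModule)). Qed.

Lemma CIok_Chasles1 g a b c : a <= b <= c -> CIok g a c -> CIok g a b.
Proof. intros Hb [H1 H2]; split; eapply (ex_RInt_Chasles_1 (V:=R_CompleteNormedModule)); eauto. Qed.
Lemma CIok_Chasles2 g a b c : a <= b <= c -> CIok g a c -> CIok g b c.
Proof. intros Hb [H1 H2]; split; eapply (ex_RInt_Chasles_2 (V:=R_CompleteNormedModule)); eauto. Qed.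

Lemma CInt_Chasles g a b c : CIok g a b -> CIok g b c -> (CInt g a b + CInt g b c)%C = CInt g a c.
Proof.
  intros [H1 H2] [H3 H4]. unfold CInt. apply injective_projections; simpl.
  - exact (RInt_Chasles (V:=R_CompleteNormedModule) _ _ _ _ H1 H3).
  - exact (RInt_Chasles (V:=R_CompleteNormedModule) _ _ _ _ H2 H4).
Qed.

Lemma CInt_comp_lin g u v a b : CIok g (u * a + v) (u * b + v) ->
  CInt (fun y => RtoC u * g (u * y + v)%R)%C a b = CInt g (u * a + v) (u * b + v).
Proof.
  intros [H1 H2]. unfold CInt. f_equal.
  - rewrite <- (RInt_comp_lin (V:=R_CompleteNormedModule) _ _ _ _ _ H1).
    apply RInt_ext. intros x _. rewrite re_mult. unfold scal; simpl; unfold mult, Re, Im; simpl. ring.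
  - rewrite <- (RInt_comp_lin (V:=R_CompleteNormedModule) _ _ _ _ _ H2).
    apply RInt_ext. intros x _. rewrite im_mult. unfold scal; simpl; unfold mult, Re, Im; simpl. ring.
Qed.

Lemma CInt_bound g a b B : a <= b -> CIok g a b -> (forall s, a <= s <= b -> Cmod (g s) <= B) ->
  Cmod (CInt g a b) <= 2 * ((b - a) * B).
Proof.
  intros Hab [H1 H2] HB. eapply Rle_trans. apply Cmod_le_sum. unfold CInt.
  assert (A1 : Rabs (RInt (fun s => Re (g s)) a b) <= (b - a) * B).
  { apply abs_RInt_le_const; auto. intros s Hs. eapply Rle_trans; [apply re_le_Cmod|]. auto. }
  assert (A2 : Rabs (RInt (fun s => Im (g s)) a b) <= (b - a) * B).
  { apply abs_RInt_le_const; auto. intros s Hs. eapply Rle_trans; [apply im_le_Cmod|]. auto. }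
  unfold Re at 1, Im at 1. simpl. lra.
Qed.

Definition Ccont (h : C -> C) (z : C) : Prop :=
  forall eps, 0 < eps -> exists d, 0 < d /\ forall w, Cmod (w - z)%C < d -> Cmod (h w - h z)%C < eps.
Definition Rcont (g : R -> C) (s : R) : Prop :=
  forall eps, 0 < eps -> exists d, 0 < d /\ forall s', Rabs (s' - s) < d -> Cmod (g s' - g s)%C < eps.

Lemma re_minus a b : Re (a - b)%C = Re a - Re b.
Proof. unfold Cminus. rewrite re_plus, re_opp. ring. Qed.
Lemma im_minus a b : Im (a - b)%C = Im a - Im b.
Proof. unfold Cminus. rewrite im_plus, im_opp. ring. Qed.

Lemma Cmod_diff_le a b : Rabs (Cmod a - Cmod b) <= Cmod (a - b)%C.
Proof.
  apply Rabs_le. split.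
  - pose proof (Cmod_sub_tri b a 0). replace (b - 0)%C with b in H by ring.
    replace (a - 0)%C with a in H by ring. rewrite Cmod_sym in H. lra.
  - pose proof (Cmod_sub_tri a b 0). replace (b - 0)%C with b in H by ring.
    replace (a - 0)%C with a in H by ring. lra.
Qed.

Lemma Rcont_realfun (g : R -> C) (F : C -> R) s :
  (forall a b, Rabs (F a - F b) <= Cmod (a - b)%C) -> Rcont g s -> continuous (fun s => F (g s)) s.
Proof.
  intros HF Hc. apply continuity_pt_filterlim.
  intros eps Heps. destruct (Hc eps Heps) as [d [Hd H]].
  exists d. split; auto. intros x [_ Hx]. simpl in *. unfold R_dist in *.
  eapply Rle_lt_trans; [apply HF|]. now apply H.
Qed.

Lemma CIok_of_Rcont g a b : a <= b -> (forall s, a <= s <= b -> Rcont g s) -> CIok g a b.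
Proof.
  intros Hab H. split; apply (ex_RInt_continuous (V:=R_CompleteNormedModule));
  rewrite Rmin_left, Rmax_right by lra; intros z Hz;
  apply (Rcont_realfun g); auto; intros; [rewrite <- re_minus; apply re_le_Cmod|rewrite <- im_minus; apply im_le_Cmod].
Qed.

Lemma exRInt_Cmod_of_Rcont g a b : a <= b -> (forall s, a <= s <= b -> Rcont g s) ->
  ex_RInt (fun s => Cmod (g s)) a b.
Proof.
  intros Hab H. apply (ex_RInt_continuous (V:=R_CompleteNormedModule)).
  rewrite Rmin_left, Rmax_right by lra; intros z Hz.
  apply (Rcont_realfun g Cmod); auto. apply Cmod_diff_le.
Qed.

Lemma Ccont_of_Cdiff h z l : Cdiff h z l -> Ccont h z.
Proof.
  intros H eps Heps. destruct (H 1 Rlt_0_1) as [d [Hd H1]].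
  pose proof (Cmod_ge_0 l).
  exists (Rmin d (eps / (Cmod l + 2))). split.
  { apply Rmin_pos; auto. apply Rdiv_lt_0_compat; lra. }
  intros w Hw. 
  assert (Hw1 : Cmod (w - z)%C < d) by (eapply Rlt_le_trans; [exact Hw| apply Rmin_l]).
  assert (Hw2 : Cmod (w - z)%C < eps / (Cmod l + 2)) by (eapply Rlt_le_trans; [exact Hw| apply Rmin_r]).
  specialize (H1 w Hw1).
  pose proof (Cmod_triangle ((h w - h z) - (w - z) * l)%C ((w - z) * l)%C) as Htri.
  replace ((h w - h z) - (w - z) * l + (w - z) * l)%C with (h w - h z)%C in Htri by ring.
  rewrite Cmod_mult in Htri.
  pose proof (Cmod_ge_0 (w - z)%C).
  apply Rmult_lt_compat_r with (r := Cmod l + 2) in Hw2; [|lra].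
  unfold Rdiv in Hw2. rewrite Rmult_assoc, Rinv_l in Hw2 by lra. nra.
Qed.

Lemma Cmod_convex p q s r : Cmod p <= r -> Cmod q <= r -> 0 <= s <= 1 ->
  Cmod (p + RtoC s * (q - p))%C <= r.
Proof.
  intros Hp Hq Hs.
  replace (p + RtoC s * (q - p))%C with (RtoC (1 - s) * p + RtoC s * q)%C
    by (rewrite RtoC_minus; ring).
  eapply Rle_trans; [apply Cmod_triangle|]. rewrite !Cmod_mult, !Cmod_RtoC by lra. nra.
Qed.

Lemma Cmod_convex_lt p q s : Cmod p < 1 -> Cmod q < 1 -> 0 <= s <= 1 ->
  Cmod (p + RtoC s * (q - p))%C < 1.
Proof.
  intros Hp Hq Hs. eapply Rle_lt_trans. apply (Cmod_convex p q s (Rmax (Cmod p) (Cmod q))); auto.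
  apply Rmax_l. apply Rmax_r. now apply Rmax_lub_lt.
Qed.

Lemma Rcont_seg h p q s : Ccont h (p + RtoC s * (q - p))%C ->
  Rcont (fun s => h (p + RtoC s * (q - p))%C) s.
Proof.
  intros H eps Heps. destruct (H eps Heps) as [d [Hd H1]].
  exists (d / (Cmod (q - p)%C + 1)). pose proof (Cmod_ge_0 (q - p)%C). split.
  { apply Rdiv_lt_0_compat; lra. }
  intros s' Hs'. apply H1.
  replace (p + RtoC s' * (q - p) - (p + RtoC s * (q - p)))%C with (RtoC (s' - s) * (q - p))%C
    by (rewrite RtoC_minus; ring).
  rewrite Cmod_mult, Cmod_R.
  apply Rmult_lt_compat_r with (r := Cmod (q - p)%C + 1) in Hs'; [|lra].
  unfold Rdiv in Hs'. rewrite Rmult_assoc, Rinv_l in Hs' by lra.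
  pose proof (Rabs_pos (s' - s)). nra.
Qed.

Definition holo (h : C -> C) : Prop := forall w, Cmod w < 1 -> exists l, Cdiff h w l.

Lemma holo_cont h w : holo h -> Cmod w < 1 -> Ccont h w.
Proof. intros H Hw. destruct (H w Hw) as [l Hl]. eapply Ccont_of_Cdiff; eauto. Qed.

Lemma CIok_seg h p q : (forall w, Cmod w < 1 -> Ccont h w) -> Cmod p < 1 -> Cmod q < 1 ->
  CIok (fun s => h (p + RtoC s * (q - p))%C) 0 1.
Proof.
  intros H Hp Hq. apply CIok_of_Rcont; [lra|]. intros s Hs. apply Rcont_seg. apply H.
  now apply Cmod_convex_lt.
Qed.

Lemma half_eq : RtoC (/2) = Cinv (1 + 1)%C.
Proof. rewrite <- RtoC_plus. rewrite RtoC_inv. f_equal. lra. Qed.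
Lemma two_nz : (1 + 1)%C <> RtoC 0.
Proof. rewrite <- RtoC_plus. intros H. apply RtoC_inj in H. lra. Qed.

Definition segf (h : C -> C) (p q : C) : R -> C := fun s => h (p + RtoC s * (q - p))%C.
Definition segI (h : C -> C) (p q : C) : C := CInt (segf h p q) 0 1.
Definition seg (h : C -> C) (p q : C) : C := ((q - p) * segI h p q)%C.
Definition tri (h : C -> C) (a b c : C) : C := (seg h a b + seg h b c + seg h c a)%C.
Definition mid (p q : C) : C := (p + RtoC (/2) * (q - p))%C.

Definition contD (h : C -> C) : Prop := forall w, Cmod w < 1 -> Ccont h w.

Lemma CIok_segf h p q : contD h -> Cmod p < 1 -> Cmod q < 1 -> CIok (segf h p q) 0 1.
Proof. intros. now apply CIok_seg. Qed.

Lemma mid_in p q : Cmod p < 1 -> Cmod q < 1 -> Cmod (mid p q) < 1.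
Proof. intros. unfold mid. apply Cmod_convex_lt; auto; lra. Qed.

Lemma mid_in_r p q r : Cmod p <= r -> Cmod q <= r -> Cmod (mid p q) <= r.
Proof. intros. unfold mid. apply Cmod_convex; auto; lra. Qed.

Lemma CInt_swap g a b : CIok g a b -> CInt g b a = (- CInt g a b)%C.
Proof.
  intros [H1 H2].
  unfold CInt. rewrite <- (opp_RInt_swap (V:=R_CompleteNormedModule) _ _ _ H1).
  rewrite <- (opp_RInt_swap (V:=R_CompleteNormedModule) _ _ _ H2).
  apply injective_projections; simpl; reflexivity.
Qed.

Lemma segI_rev h p q : contD h -> Cmod p < 1 -> Cmod q < 1 -> segI h q p = segI h p q.
Proof.
  intros Hc Hp Hq.
  pose proof (CIok_segf h p q Hc Hp Hq) as [K1 K2].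
  assert (E : CInt (fun y => RtoC (-1) * segf h p q (-1 * y + 1)%R)%C 0 1 = CInt (segf h p q) (-1 * 0 + 1) (-1 * 1 + 1)).
  { apply CInt_comp_lin.
    replace (-1 * 0 + 1) with 1 by lra. replace (-1 * 1 + 1) with 0 by lra.
    split; apply (ex_RInt_swap (V:=R_CompleteNormedModule)); assumption. }
  replace (-1 * 0 + 1) with 1 in E by lra. replace (-1 * 1 + 1) with 0 in E by lra.
  rewrite (CInt_swap _ 0 1) in E by (split; assumption).
  rewrite (CInt_ext _ (fun y => RtoC (-1) * segf h q p y)%C) in E.
  2:{ intros x _. unfold segf. f_equal. f_equal.
      apply injective_projections; simpl; ring. }
  rewrite CInt_cmul in E by (apply CIok_segf; auto).
  unfold segI.
  replace (CInt (segf h q p) 0 1) with (RtoC (-1) * (RtoC (-1) * CInt (segf h q p) 0 1))%C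
    by (apply injective_projections; simpl; ring).
  rewrite E. apply injective_projections; simpl; ring.
Qed.

Lemma seg_rev h p q : contD h -> Cmod p < 1 -> Cmod q < 1 -> seg h q p = (- seg h p q)%C.
Proof. intros. unfold seg. rewrite segI_rev by auto. ring. Qed.

Lemma seg_split h p q : contD h -> Cmod p < 1 -> Cmod q < 1 ->
  seg h p q = (seg h p (mid p q) + seg h (mid p q) q)%C.
Proof.
  intros Hc Hp Hq.
  assert (Hm : Cmod (mid p q) < 1) by (now apply mid_in).
  assert (Hok : CIok (segf h p q) 0 1) by (now apply CIok_segf).
  assert (E1 : CInt (segf h p q) 0 (/2) = (RtoC (/2) * segI h p (mid p q))%C).
  { assert (X : CInt (fun y => RtoC (/2) * segf h p q (/2 * y + 0)%R)%C 0 1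
               = CInt (segf h p q) (/2 * 0 + 0) (/2 * 1 + 0)).
    { apply CInt_comp_lin.
      replace (/2 * 0 + 0) with 0 by lra. replace (/2 * 1 + 0) with (/2) by lra.
      eapply CIok_Chasles1; [|exact Hok]. lra. }
    replace (/2 * 0 + 0) with 0 in X by lra. replace (/2 * 1 + 0) with (/2) in X by lra.
    rewrite <- X.
    rewrite (CInt_ext _ (fun y => RtoC (/2) * segf h p (mid p q) y)%C).
    2:{ intros x _. unfold segf, mid. f_equal. f_equal. apply injective_projections; simpl; field. }
    apply CInt_cmul. now apply CIok_segf. }
  assert (E2 : CInt (segf h p q) (/2) 1 = (RtoC (/2) * segI h (mid p q) q)%C).
  { assert (X : CInt (fun y => RtoC (/2) * segf h p q (/2 * y + /2)%R)%C 0 1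
               = CInt (segf h p q) (/2 * 0 + /2) (/2 * 1 + /2)).
    { apply CInt_comp_lin.
      replace (/2 * 0 + /2) with (/2) by lra. replace (/2 * 1 + /2) with 1 by lra.
      eapply CIok_Chasles2; [|exact Hok]. lra. }
    replace (/2 * 0 + /2) with (/2) in X by lra. replace (/2 * 1 + /2) with 1 in X by lra.
    rewrite <- X.
    rewrite (CInt_ext _ (fun y => RtoC (/2) * segf h (mid p q) q y)%C).
    2:{ intros x _. unfold segf, mid. f_equal. f_equal. apply injective_projections; simpl; field. }
    apply CInt_cmul. now apply CIok_segf. }
  unfold seg at 1, segI at 1.
  rewrite <- (CInt_Chasles _ 0 (/2) 1).
  2: eapply CIok_Chasles1; [|exact Hok]; lra.
  2: eapply CIok_Chasles2; [|exact Hok]; lra.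
  rewrite E1, E2. unfold seg, mid. apply injective_projections; simpl; field.
Qed.

Lemma tri_subdiv h a b c : contD h -> Cmod a < 1 -> Cmod b < 1 -> Cmod c < 1 ->
  tri h a b c = (tri h a (mid a b) (mid c a) + tri h (mid a b) b (mid b c)
                 + tri h (mid c a) (mid b c) c + tri h (mid a b) (mid b c) (mid c a))%C.
Proof.
  intros Hc Ha Hb Hcc.
  assert (Hab := mid_in a b Ha Hb). assert (Hbc := mid_in b c Hb Hcc). assert (Hca := mid_in c a Hcc Ha).
  unfold tri.
  rewrite (seg_split h a b), (seg_split h b c), (seg_split h c a) by auto.
  rewrite (seg_rev h (mid c a) (mid a b)), (seg_rev h (mid a b) (mid b c)),
          (seg_rev h (mid b c) (mid c a)) by auto.
  ring.
Qed.

Lemma RInt_id01 : RInt (fun s => s) 0 1 = /2.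
Proof.
  apply is_RInt_unique.
  assert (H := is_RInt_derive (V:=R_CompleteNormedModule) (fun s => s * s / 2) (fun s => s) 0 1).
  replace (/2) with (@minus R_AbelianGroup ((fun s => s * s / 2) 1) ((fun s => s * s / 2) 0))
    by (unfold minus, plus, opp; simpl; field).
  apply H.
  - intros x _. auto_derive; [auto|field].
  - intros x _. apply continuous_id.
Qed.

Lemma CIok_id : CIok (fun s => RtoC s) 0 1.
Proof.
  split.
  - apply (ex_RInt_continuous (V:=R_CompleteNormedModule)). intros; apply continuous_id.
  - eapply ex_RInt_ext; [|apply (ex_RInt_const (V:=R_CompleteNormedModule) 0 1 0)].
    intros; reflexivity.
Qed.

Lemma CInt_id : CInt (fun s => RtoC s) 0 1 = RtoC (/2).
Proof.
  unfold CInt.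
  rewrite (RInt_ext (fun s => Re (RtoC s)) (fun s => s)) by reflexivity.
  rewrite (RInt_ext (fun s => Im (RtoC s)) (fun s => 0)) by reflexivity.
  rewrite RInt_id01.
  rewrite (RInt_const (V:=R_CompleteNormedModule)). unfold scal; simpl; unfold mult; simpl.
  apply injective_projections; simpl; ring.
Qed.
Lemma CInt_affine A B : CInt (fun s => A + RtoC s * B)%C 0 1 = (A + RtoC (/2) * B)%C.
Proof.
  assert (E : forall x, (A + RtoC x * B = (fun _ => A) x + B * RtoC x)%C).
  { intros x. cbv beta. ring. }
  rewrite (CInt_ext (fun s => A + RtoC s * B)%C (fun s => (fun _ => A) s + B * RtoC s)%C 0 1 (fun x _ => E x)).
  rewrite (CInt_plus (fun _ => A) (fun s => B * RtoC s)%C 0 1 (CIok_const _ _ _) (CIok_cmul _ _ _ _ CIok_id)).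
  rewrite CInt_const, (CInt_cmul _ _ _ _ CIok_id), CInt_id.
  rewrite <- RtoC_minus. replace (1 - 0) with 1 by ring. ring.
Qed.
Lemma seg_aff h g p q c0 L w : contD h -> contD g -> Cmod p < 1 -> Cmod q < 1 ->
  (forall x, g x = h x - (c0 + (x - w) * L))%C ->
  (seg h p q - seg g p q)%C = ((q - p) * (c0 + (mid p q - w) * L))%C.
Proof.
  intros Hh Hg Hp Hq Hgx. unfold seg, segI.
  replace ((q - p) * CInt (segf h p q) 0 1 - (q - p) * CInt (segf g p q) 0 1)%C
    with ((q - p) * (CInt (segf h p q) 0 1 - CInt (segf g p q) 0 1))%C by ring.
  rewrite <- CInt_minus by (apply CIok_segf; auto).
  assert (E : forall x, Rmin 0 1 < x < Rmax 0 1 -> (segf h p q x - segf g p q x)%C = ((c0 + (p - w) * L) + RtoC x * ((q - p) * L))%C).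
  { intros x _. unfold segf. rewrite Hgx. ring. }
  rewrite (CInt_ext _ _ 0 1 E).
  rewrite CInt_affine. unfold mid. ring.
Qed.

Lemma tri_aff h g a b c c0 L w : contD h -> contD g -> Cmod a < 1 -> Cmod b < 1 -> Cmod c < 1 ->
  (forall x, g x = h x - (c0 + (x - w) * L))%C ->
  tri h a b c = tri g a b c.
Proof.
  intros Hh Hg Ha Hb Hc Hgx.
  apply Ceq_minus. unfold tri.
  replace (seg h a b + seg h b c + seg h c a - (seg g a b + seg g b c + seg g c a))%C
    with ((seg h a b - seg g a b) + (seg h b c - seg g b c) + (seg h c a - seg g c a))%C by ring.
  rewrite !(seg_aff h g _ _ c0 L w) by auto.
  unfold mid. rewrite half_eq. field; try exact two_nz.
Qed.

Lemma Ccont_aff h c0 L w z : Ccont h z -> Ccont (fun x => h x - (c0 + (x - w) * L))%C z.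
Proof.
  intros H eps Heps. destruct (H (eps / 2)) as [d [Hd H1]]; [lra|].
  pose proof (Cmod_ge_0 L).
  exists (Rmin d (eps / (2 * (Cmod L + 1)))). split.
  { apply Rmin_pos; auto. apply Rdiv_lt_0_compat; lra. }
  intros x Hx.
  assert (Hx1 : Cmod (x - z)%C < d) by (eapply Rlt_le_trans; [exact Hx| apply Rmin_l]).
  assert (Hx2 : Cmod (x - z)%C < eps / (2 * (Cmod L + 1))) by (eapply Rlt_le_trans; [exact Hx| apply Rmin_r]).
  replace (h x - (c0 + (x - w) * L) - (h z - (c0 + (z - w) * L)))%C
    with ((h x - h z) + - ((x - z) * L))%C by ring.
  eapply Rle_lt_trans; [apply Cmod_triangle|]. rewrite Cmod_opp, Cmod_mult.
  specialize (H1 x Hx1). pose proof (Cmod_ge_0 (x - z)%C).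
  apply Rmult_lt_compat_r with (r := 2 * (Cmod L + 1)) in Hx2; [|lra].
  unfold Rdiv in Hx2. rewrite Rmult_assoc, Rinv_l in Hx2 by lra. nra.
Qed.

Lemma seg_bound g p q B : contD g -> Cmod p < 1 -> Cmod q < 1 ->
  (forall s, 0 <= s <= 1 -> Cmod (g (p + RtoC s * (q - p))%C) <= B) ->
  Cmod (seg g p q) <= Cmod (q - p)%C * (2 * B).
Proof.
  intros Hg Hp Hq HB. unfold seg. rewrite Cmod_mult.
  apply Rmult_le_compat_l. apply Cmod_ge_0.
  replace (2 * B) with (2 * ((1 - 0) * B)) by ring.
  apply CInt_bound; [lra| apply CIok_segf; auto| exact HB].
Qed.

Ltac Ceqf := apply injective_projections; simpl; field.

Definition tri3 h (t : C * C * C) : C := let '(a, b, c) := t in tri h a b c.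
Definition per (t : C * C * C) : R := let '(a, b, c) := t in
  Cmod (a - b)%C + Cmod (b - c)%C + Cmod (c - a)%C.
Definition va (t : C * C * C) : C := let '(a, _, _) := t in a.
Definition inball (r : R) (t : C * C * C) : Prop := let '(a, b, c) := t in
  Cmod a <= r /\ Cmod b <= r /\ Cmod c <= r.

Definition step h (t : C * C * C) : C * C * C :=
  let '(a, b, c) := t in
  let T := Cmod (tri h a b c) / 4 in
  if Rle_dec T (Cmod (tri h a (mid a b) (mid c a))) then (a, mid a b, mid c a)
  else if Rle_dec T (Cmod (tri h (mid a b) b (mid b c))) then (mid a b, b, mid b c)
  else if Rle_dec T (Cmod (tri h (mid c a) (mid b c) c)) then (mid c a, mid b c, c)
  else (mid a b, mid b c, mid c a).

Lemma step_inball h r t : inball r t -> inball r (step h t).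
Proof.
  destruct t as [[a b] c]. intros [Ha [Hb Hc]]. unfold step.
  repeat destruct Rle_dec; simpl; repeat split; auto; apply mid_in_r; auto.
Qed.

Lemma Cmod_half_eq x y u v : (x - y = RtoC (/2) * (u - v))%C -> Cmod (x - y)%C = / 2 * Cmod (u - v)%C.
Proof. intros H. rewrite H, Cmod_mult, Cmod_RtoC by lra. reflexivity. Qed.

Lemma step_per h t : per (step h t) = per t / 2.
Proof.
  destruct t as [[a b] c]. unfold step.
  pose proof (Cmod_sym a b). pose proof (Cmod_sym b c). pose proof (Cmod_sym c a).
  repeat destruct Rle_dec; simpl.
  - rewrite (Cmod_half_eq a (mid a b) a b), (Cmod_half_eq (mid a b) (mid c a) b c),
      (Cmod_half_eq (mid c a) a c a) by (unfold mid; Ceqf). lra.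
  - rewrite (Cmod_half_eq (mid a b) b a b), (Cmod_half_eq b (mid b c) b c),
      (Cmod_half_eq (mid b c) (mid a b) c a) by (unfold mid; Ceqf). lra.
  - rewrite (Cmod_half_eq (mid c a) (mid b c) a b), (Cmod_half_eq (mid b c) c b c),
      (Cmod_half_eq c (mid c a) c a) by (unfold mid; Ceqf). lra.
  - rewrite (Cmod_half_eq (mid a b) (mid b c) a c), (Cmod_half_eq (mid b c) (mid c a) b a),
      (Cmod_half_eq (mid c a) (mid a b) c b) by (unfold mid; Ceqf).
    rewrite (Cmod_sym a c), (Cmod_sym b a), (Cmod_sym c b). lra.
Qed.

Lemma step_tri h t r : contD h -> r < 1 -> inball r t ->
  Cmod (tri3 h t) <= 4 * Cmod (tri3 h (step h t)).
Proof.
  destruct t as [[a b] c]. intros Hh Hr [Ha [Hb Hc]]. unfold step.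
  assert (E := tri_subdiv h a b c Hh ltac:(lra) ltac:(lra) ltac:(lra)).
  set (T1 := tri h a (mid a b) (mid c a)) in *.
  set (T2 := tri h (mid a b) b (mid b c)) in *.
  set (T3 := tri h (mid c a) (mid b c) c) in *.
  set (T4 := tri h (mid a b) (mid b c) (mid c a)) in *.
  assert (Hs : Cmod (tri h a b c) <= Cmod T1 + Cmod T2 + Cmod T3 + Cmod T4).
  { rewrite E. eapply Rle_trans; [apply Cmod_triangle|].
    eapply Rle_trans; [apply Rplus_le_compat_r, Cmod_triangle|].
    eapply Rle_trans; [apply Rplus_le_compat_r, Rplus_le_compat_r, Cmod_triangle|]. lra. }
  simpl.
  repeat destruct Rle_dec; simpl; fold T1 T2 T3 T4; lra.
Qed.

Lemma step_va h t : Cmod (va (step h t) - va t)%C <= per t.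
Proof.
  destruct t as [[a b] c]. unfold step.
  pose proof (Cmod_ge_0 (a - b)%C). pose proof (Cmod_ge_0 (b - c)%C). pose proof (Cmod_ge_0 (c - a)%C).
  pose proof (Cmod_sym a b).
  repeat destruct Rle_dec; simpl.
  - replace (a - a)%C with (RtoC 0) by ring. rewrite Cmod_0. lra.
  - rewrite (Cmod_half_eq (mid a b) a b a) by (unfold mid; Ceqf). lra.
  - rewrite (Cmod_half_eq (mid c a) a c a) by (unfold mid; Ceqf). lra.
  - rewrite (Cmod_half_eq (mid a b) a b a) by (unfold mid; Ceqf). lra.
Qed.

Lemma near_vertex p q a P s : Cmod (p - a)%C <= P -> Cmod (q - a)%C <= P -> 0 <= s <= 1 ->
  Cmod (p + RtoC s * (q - p) - a)%C <= P.
Proof.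
  intros Hp Hq Hs.
  replace (p + RtoC s * (q - p) - a)%C with ((p - a) + RtoC s * ((q - a) - (p - a)))%C by ring.
  now apply Cmod_convex.
Qed.

Lemma pow4_half n : 4 ^ n * ((/2) ^ n * (/2) ^ n) = 1.
Proof.
  induction n; simpl. ring. 
  replace (4 * 4 ^ n * (/ 2 * (/ 2) ^ n * (/ 2 * (/ 2) ^ n))) with (4 ^ n * ((/ 2) ^ n * (/ 2) ^ n)) by field.
  exact IHn.
Qed.

Lemma small_geom P0 e : 0 <= P0 -> 0 < e -> exists N, forall n, (n >= N)%nat -> P0 * (/2) ^ n < e.
Proof.
  intros HP He.
  destruct (pow_lt_1_zero (/2) ltac:(rewrite Rabs_pos_eq; lra) (e / (P0 + 1)) ltac:(apply Rdiv_lt_0_compat; lra)) as [N HN].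
  exists N. intros n Hn. specialize (HN n Hn).
  rewrite Rabs_pos_eq in HN by (apply pow_le; lra).
  assert (0 < (/2) ^ n) by (apply pow_lt; lra).
  apply Rmult_lt_compat_r with (r := P0 + 1) in HN; [|lra].
  unfold Rdiv in HN. rewrite Rmult_assoc, Rinv_l in HN by lra. nra.
Qed.

Theorem goursat h : holo h -> forall a b c, Cmod a < 1 -> Cmod b < 1 -> Cmod c < 1 -> tri h a b c = RtoC 0.
Proof.
  intros Hh a b c Ha Hb Hc.
  assert (Hcont : contD h) by (intros w Hw; now apply holo_cont).
  set (r := Rmax (Cmod a) (Rmax (Cmod b) (Cmod c))).
  assert (Hr : r < 1) by (unfold r; repeat apply Rmax_lub_lt; auto).
  set (t0 := (a, b, c)).
  set (T := fun n => Nat.iter n (step h) t0).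
  assert (TS : forall n, T (S n) = step h (T n)) by reflexivity.
  assert (I1 : forall n, inball r (T n)).
  { induction n. - simpl. unfold r; repeat split.
      apply Rmax_l. eapply Rle_trans; [|apply Rmax_r]; apply Rmax_l.
      eapply Rle_trans; [|apply Rmax_r]; apply Rmax_r.
    - rewrite TS. now apply step_inball. }
  set (P0 := per t0).
  set (P := fun n => P0 * (/2) ^ n).
  assert (HP0 : 0 <= P0) by (unfold P0, t0, per; pose proof (Cmod_ge_0 (a - b)%C);
     pose proof (Cmod_ge_0 (b - c)%C); pose proof (Cmod_ge_0 (c - a)%C); lra).
  assert (HPpos : forall n, 0 <= P n) by (intros; unfold P; apply Rmult_le_pos; auto; apply pow_le; lra).
  assert (I2 : forall n, per (T n) = P n).
  { induction n. - unfold P. rewrite pow_O, Rmult_1_r. reflexivity. - rewrite TS, step_per, IHn. unfold P. simpl. field. }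
  assert (I3 : forall n, Cmod (tri3 h t0) <= 4 ^ n * Cmod (tri3 h (T n))).
  { induction n. - simpl. lra. - rewrite TS. eapply Rle_trans; [exact IHn|].
      simpl. rewrite (Rmult_comm 4 (4 ^ n)), Rmult_assoc. apply Rmult_le_compat_l. apply pow_le; lra.
      eapply step_tri; eauto. }
  set (u := fun n => va (T n)).
  assert (I5 : forall n k, Cmod (u (n + k)%nat - u n)%C <= 2 * P n - 2 * P (n + k)%nat).
  { intros n k. induction k.
    - rewrite Nat.add_0_r. replace (u n - u n)%C with (RtoC 0) by ring. rewrite Cmod_0. lra.
    - rewrite Nat.add_succ_r. eapply Rle_trans; [apply (Cmod_sub_tri _ (u (n + k)%nat))|].
      unfold u at 1. rewrite TS. pose proof (step_va h (T (n + k)%nat)). rewrite I2 in H.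
      fold (u (n + k)%nat) in H.
      assert (P (S (n + k)) = P (n + k)%nat / 2) by (unfold P; simpl; field).
      lra. }
  assert (Hsmall : forall e, 0 < e -> exists N, forall n, (n >= N)%nat -> P n < e).
  { intros e He. apply small_geom; auto. }
  assert (Hcauchy : forall (F : C -> R), (forall x y, Rabs (F x - F y) <= Cmod (x - y)%C) ->
            Cauchy_crit (fun n => F (u n))).
  { intros F HF e He. destruct (Hsmall (e / 2)) as [N HN]; [lra|]. exists N.
    intros n m Hn Hm. unfold R_dist.
    destruct (Nat.le_ge_cases n m) as [Hnm|Hnm].
    - replace m with (n + (m - n))%nat by lia. rewrite Rabs_minus_sym.
      eapply Rle_lt_trans; [apply HF|]. eapply Rle_lt_trans; [apply I5|].
      specialize (HN n Hn). pose proof (HPpos (n + (m - n))%nat). lra.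
    - replace n with (m + (n - m))%nat by lia.
      eapply Rle_lt_trans; [apply HF|]. eapply Rle_lt_trans; [apply I5|].
      specialize (HN m Hm). pose proof (HPpos (m + (n - m))%nat). lra. }
  assert (HFre : forall x y, Rabs (Re x - Re y) <= Cmod (x - y)%C) by (intros; rewrite <- re_minus; apply re_le_Cmod).
  assert (HFim : forall x y, Rabs (Im x - Im y) <= Cmod (x - y)%C) by (intros; rewrite <- im_minus; apply im_le_Cmod).
  destruct (Rcomplete.R_complete _ (Hcauchy Re HFre)) as [lr Hlr].
  destruct (Rcomplete.R_complete _ (Hcauchy Im HFim)) as [li Hli].
  set (w := (lr, li) : C).
  assert (Hlim : forall (F : C -> R) l, (forall x y, Rabs (F x - F y) <= Cmod (x - y)%C) ->
            Un_cv (fun n => F (u n)) l -> forall n, Rabs (l - F (u n)) <= 2 * P n).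
  { intros F l HF Hl n. apply Rle_plus_epsilon. intros e He.
    destruct (Hl e He) as [N HN]. specialize (HN (n + N)%nat ltac:(lia)). unfold R_dist in HN.
    pose proof (HF (u (n + N)%nat) (u n)). pose proof (I5 n N). pose proof (HPpos (n + N)%nat).
    replace (l - F (u n)) with ((F (u (n + N)%nat) - F (u n)) - (F (u (n + N)%nat) - l)) by ring.
    eapply Rle_trans; [apply Rabs_triang|]. rewrite Rabs_Ropp. lra. }
  assert (Hw : forall n, Cmod (w - u n)%C <= 4 * P n).
  { intros n. eapply Rle_trans; [apply Cmod_le_sum|]. rewrite re_minus, im_minus.
    pose proof (Hlim Re lr HFre Hlr n). pose proof (Hlim Im li HFim Hli n).
    unfold w, Re at 1, Im at 1. simpl. lra. }
  assert (Hwr : Cmod w <= r).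
  { apply Rle_plus_epsilon. intros e He. destruct (Hsmall (e / 4)) as [N HN]; [lra|].
    specialize (HN N (le_n N)). pose proof (Hw N).
    assert (Cmod (u N) <= r) by (unfold u; pose proof (I1 N) as HI; destruct (T N) as [[x1 x2] x3]; simpl in *; tauto).
    pose proof (Cmod_sub_tri w (u N) 0). replace (w - 0)%C with w in H1 by ring.
    replace (u N - 0)%C with (u N) in H1 by ring. lra. }
  destruct (Hh w ltac:(lra)) as [L HL].
  set (g := fun x => (h x - (h w + (x - w) * L))%C).
  assert (Hgc : contD g) by (intros z Hz; apply Ccont_aff; now apply Hcont).
  assert (Hbound : forall eps, 0 < eps -> Cmod (tri3 h t0) <= 10 * eps * (P0 * P0)).
  { intros eps Heps. destruct (HL eps Heps) as [d [Hd Hdl]].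
    destruct (Hsmall (d / 5)) as [n Hn]; [lra|]. specialize (Hn n (le_n n)).
    eapply Rle_trans; [apply (I3 n)|].
    assert (Htn : Cmod (tri3 h (T n)) <= 10 * eps * (P n * P n)).
    { pose proof (I1 n) as Hin. pose proof (I2 n) as Hper. pose proof (Hw n) as Hwn.
      unfold u in Hwn. destruct (T n) as [[a' b'] c']. simpl in Hin, Hper, Hwn |- *.
      destruct Hin as [Ha' [Hb' Hc']].
      rewrite (tri_aff h g a' b' c' (h w) L w Hcont Hgc ltac:(lra) ltac:(lra) ltac:(lra) (fun x => eq_refl)).
      assert (Hpt : forall p q s, Cmod (p - a')%C <= P n -> Cmod (q - a')%C <= P n -> 0 <= s <= 1 ->
                 Cmod (g (p + RtoC s * (q - p))%C) <= eps * (5 * P n)).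
      { intros p q s Hp Hq Hs. set (x := (p + RtoC s * (q - p))%C).
        assert (Hx : Cmod (x - a')%C <= P n) by (now apply near_vertex).
        assert (Hxw : Cmod (x - w)%C <= 5 * P n).
        { pose proof (Cmod_sub_tri x a' w). rewrite (Cmod_sym a' w) in H. lra. }
        unfold g. replace (h x - (h w + (x - w) * L))%C with (h x - h w - (x - w) * L)%C by ring.
        eapply Rle_trans; [apply Hdl; lra|]. apply Rmult_le_compat_l; lra. }
      assert (Hd1 : Cmod (a' - a')%C <= P n) by (replace (a' - a')%C with (RtoC 0) by ring; rewrite Cmod_0; auto).
      assert (Hd2 : Cmod (b' - a')%C <= P n).
      { rewrite Cmod_sym. pose proof (Cmod_ge_0 (b' - c')%C). pose proof (Cmod_ge_0 (c' - a')%C). lra. }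
      assert (Hd3 : Cmod (c' - a')%C <= P n).
      { pose proof (Cmod_ge_0 (b' - c')%C). pose proof (Cmod_ge_0 (a' - b')%C). lra. }
      unfold tri.
      pose proof (seg_bound g a' b' (eps * (5 * P n)) Hgc ltac:(lra) ltac:(lra) (fun s Hs => Hpt a' b' s Hd1 Hd2 Hs)).
      pose proof (seg_bound g b' c' (eps * (5 * P n)) Hgc ltac:(lra) ltac:(lra) (fun s Hs => Hpt b' c' s Hd2 Hd3 Hs)).
      pose proof (seg_bound g c' a' (eps * (5 * P n)) Hgc ltac:(lra) ltac:(lra) (fun s Hs => Hpt c' a' s Hd3 Hd1 Hs)).
      rewrite (Cmod_sym b' a'), (Cmod_sym c' b'), (Cmod_sym a' c') in *.
      eapply Rle_trans; [apply Cmod_triangle|].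
      eapply Rle_trans; [apply Rplus_le_compat_r, Cmod_triangle|].
      rewrite <- Hper. 
      pose proof (HPpos n). nra. }
    apply Rle_trans with (4 ^ n * (10 * eps * (P n * P n))).
    { apply Rmult_le_compat_l; auto. apply pow_le; lra. }
    unfold P. replace (4 ^ n * (10 * eps * (P0 * (/ 2) ^ n * (P0 * (/ 2) ^ n))))
      with ((4 ^ n * ((/2) ^ n * (/2) ^ n)) * (10 * eps * (P0 * P0))) by ring.
    rewrite pow4_half. lra. }
  change (tri h a b c) with (tri3 h t0).
  apply Cmod_eq_0. apply Rle_antisym; [|apply Cmod_ge_0].
  apply Rle_plus_epsilon. intros e He.
  pose proof (Hbound (e / (10 * (P0 * P0) + 1)) ltac:(apply Rdiv_lt_0_compat; nra)).
  assert (10 * (e / (10 * (P0 * P0) + 1)) * (P0 * P0) <= e).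
  { unfold Rdiv. 
    replace (10 * (e * / (10 * (P0 * P0) + 1)) * (P0 * P0)) with (e * (10 * (P0 * P0) / (10 * (P0 * P0) + 1))) by (field; nra).
    assert (10 * (P0 * P0) / (10 * (P0 * P0) + 1) <= 1).
    { apply Rmult_le_reg_r with (10 * (P0 * P0) + 1). nra. unfold Rdiv. rewrite Rmult_assoc, Rinv_l by nra. nra. }
    nra. }
  lra.
Qed.

Lemma prim_deriv h z : holo h -> Cmod z < 1 -> Cdiff (fun w => seg h 0 w) z (h z).
Proof.
  intros Hh Hz eps Heps.
  assert (Hc : contD h) by (intros w Hw; now apply holo_cont).
  destruct (Hc z Hz (eps / 4)) as [d1 [Hd1 H1]]; [lra|].
  exists (Rmin d1 (1 - Cmod z)). split; [apply Rmin_pos; lra|].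
  intros w Hw.
  assert (Hw1 : Cmod (w - z)%C < d1) by (eapply Rlt_le_trans; [exact Hw| apply Rmin_l]).
  assert (Hw2 : Cmod (w - z)%C < 1 - Cmod z) by (eapply Rlt_le_trans; [exact Hw| apply Rmin_r]).
  assert (Hwd : Cmod w < 1).
  { pose proof (Cmod_sub_tri w z 0). replace (w - 0)%C with w in H by ring.
    replace (z - 0)%C with z in H by ring. lra. }
  assert (H0 : Cmod (RtoC 0) < 1) by (rewrite Cmod_0; lra).
  pose proof (goursat h Hh 0 z w H0 Hz Hwd) as Ht. unfold tri in Ht.
  rewrite (seg_rev h 0 w) in Ht by auto.
  replace (seg h 0 w - seg h 0 z - (w - z) * h z)%C with (seg h z w - (w - z) * h z)%C.
  2:{ apply Ceq_minus. transitivity (seg h 0 z + seg h z w + - seg h 0 w)%C; [ring|].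
      rewrite Ht. ring. }
  unfold seg, segI.
  replace ((w - z) * CInt (segf h z w) 0 1 - (w - z) * h z)%C
    with ((w - z) * (CInt (segf h z w) 0 1 - CInt (fun _ => h z) 0 1))%C.
  2:{ rewrite CInt_const. replace (RtoC (1 - 0)) with (RtoC 1) by (f_equal; ring). ring. }
  assert (Hok1 : CIok (segf h z w) 0 1) by (apply CIok_segf; auto).
  rewrite <- (CInt_minus (segf h z w) (fun _ => h z) 0 1 Hok1 (CIok_const _ _ _)).
  rewrite Cmod_mult.
  assert (Hb : Cmod (CInt (fun s => segf h z w s - h z)%C 0 1) <= 2 * ((1 - 0) * (eps / 4))).
  { apply CInt_bound; [lra| exact (CIok_minus _ _ _ _ Hok1 (CIok_const _ _ _)) |].
    intros s Hs. unfold segf. left. apply H1.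
    replace (z + RtoC s * (w - z) - z)%C with (RtoC s * (w - z))%C by ring.
    rewrite Cmod_mult, Cmod_RtoC by lra. pose proof (Cmod_ge_0 (w - z)%C). nra. }
  pose proof (Cmod_ge_0 (w - z)%C). rewrite Rmult_comm. apply Rmult_le_compat_r; auto. lra.
Qed.

Lemma Cdiff_ext_loc F G z l r : 0 < r -> (forall w, Cmod (w - z)%C < r -> F w = G w) ->
  Cdiff F z l -> Cdiff G z l.
Proof.
  intros Hr HFG H eps Heps. destruct (H eps Heps) as [d [Hd H1]].
  exists (Rmin d r). split; [apply Rmin_pos; auto|]. intros w Hw.
  assert (Hw1 : Cmod (w - z)%C < d) by (eapply Rlt_le_trans; [exact Hw| apply Rmin_l]).
  assert (Hw2 : Cmod (w - z)%C < r) by (eapply Rlt_le_trans; [exact Hw| apply Rmin_r]).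
  rewrite <- (HFG w Hw2), <- (HFG z) by (replace (z - z)%C with (RtoC 0) by ring; rewrite Cmod_0; lra).
  auto.
Qed.

Lemma Cdiff_mult f g z lf lg : Cdiff f z lf -> Cdiff g z lg ->
  Cdiff (fun w => f w * g w)%C z (lf * g z + f z * lg)%C.
Proof.
  intros Hf Hg eps Heps.
  set (K := Cmod (g z) + 1 + Cmod (f z) + Cmod lf + 1).
  pose proof (Cmod_ge_0 (g z)) as P1. pose proof (Cmod_ge_0 (f z)) as P2. pose proof (Cmod_ge_0 lf) as P3.
  assert (HK : 1 <= K) by (unfold K; lra).
  set (e := eps / (3 * K)).
  assert (He : 0 < e) by (unfold e; apply Rdiv_lt_0_compat; lra).
  assert (HeK : e * K = eps / 3) by (unfold e; field; lra).
  destruct (Hf e He) as [d1 [Hd1 H1]].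
  destruct (Hg e He) as [d2 [Hd2 H2]].
  destruct (Ccont_of_Cdiff g z lg Hg (Rmin 1 e) ltac:(apply Rmin_pos; lra)) as [d3 [Hd3 H3]].
  exists (Rmin d1 (Rmin d2 d3)). split; [repeat apply Rmin_pos; auto|].
  intros w Hw.
  assert (Hw1 : Cmod (w - z)%C < d1) by (eapply Rlt_le_trans; [exact Hw| apply Rmin_l]).
  assert (Hw2 : Cmod (w - z)%C < d2) by (eapply Rlt_le_trans; [exact Hw| eapply Rle_trans; [apply Rmin_r|apply Rmin_l]]).
  assert (Hw3 : Cmod (w - z)%C < d3) by (eapply Rlt_le_trans; [exact Hw| eapply Rle_trans; [apply Rmin_r|apply Rmin_r]]).
  specialize (H1 w Hw1). specialize (H2 w Hw2). specialize (H3 w Hw3).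
  assert (H3a : Cmod (g w - g z)%C < 1) by (eapply Rlt_le_trans; [exact H3| apply Rmin_l]).
  assert (H3b : Cmod (g w - g z)%C < e) by (eapply Rlt_le_trans; [exact H3| apply Rmin_r]).
  assert (Hgw : Cmod (g w) <= Cmod (g z) + 1).
  { pose proof (Cmod_sub_tri (g w) (g z) 0) as H4. replace (g w - 0)%C with (g w) in H4 by ring.
    replace (g z - 0)%C with (g z) in H4 by ring. lra. }
  set (Rf := (f w - f z - (w - z) * lf)%C) in *.
  set (Rg := (g w - g z - (w - z) * lg)%C) in *.
  replace (f w * g w - f z * g z - (w - z) * (lf * g z + f z * lg))%C
    with (Rf * g w + f z * Rg + (w - z) * lf * (g w - g z))%C by (unfold Rf, Rg; ring).
  eapply Rle_trans; [apply Cmod_triangle|].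
  eapply Rle_trans; [apply Rplus_le_compat_r, Cmod_triangle|].
  rewrite !Cmod_mult.
  pose proof (Cmod_ge_0 (w - z)%C). pose proof (Cmod_ge_0 Rf). pose proof (Cmod_ge_0 Rg).
  pose proof (Cmod_ge_0 (g w)). pose proof (Cmod_ge_0 (g w - g z)%C).
  assert (A1 : Cmod Rf * Cmod (g w) <= e * Cmod (w - z)%C * (Cmod (g z) + 1)).
  { apply Rmult_le_compat; auto. }
  assert (A2 : Cmod (f z) * Cmod Rg <= Cmod (f z) * (e * Cmod (w - z)%C)).
  { apply Rmult_le_compat_l; auto. }
  assert (A3 : Cmod (w - z)%C * Cmod lf * Cmod (g w - g z)%C <= Cmod (w - z)%C * Cmod lf * e).
  { apply Rmult_le_compat_l; [apply Rmult_le_pos; auto| lra]. }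
  assert (B : e * (Cmod (g z) + 1) + Cmod (f z) * e + Cmod lf * e <= eps).
  { replace (e * (Cmod (g z) + 1) + Cmod (f z) * e + Cmod lf * e) with (e * (K - 1)) by (unfold K; ring).
    nra. }
  nra.
Qed.

Lemma Cmod_lower a b : Cmod a - Cmod b <= Cmod (a + b)%C.
Proof.
  pose proof (Cmod_triangle (a + b)%C (- b)%C). rewrite Cmod_opp in H.
  replace (a + b + - b)%C with a in H by ring. lra.
Qed.

Lemma Cdiff_inv_aff c k z : (c + k * z)%C <> RtoC 0 ->
  Cdiff (fun w => Cinv (c + k * w))%C z (- k * Cinv ((c + k * z) * (c + k * z)))%C.
Proof.
  intros Hnz eps Heps.
  set (m := Cmod (c + k * z)%C). set (K := Cmod k).
  assert (Hm : 0 < m) by (apply Cmod_gt_0; auto).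
  pose proof (Cmod_ge_0 k) as HK0. fold K in HK0.
  set (d := Rmin (m / (2 * (K + 1))) (eps * (m * m * m) / (2 * (K * K) + 1))).
  assert (Hd : 0 < d).
  { apply Rmin_pos; apply Rdiv_lt_0_compat; try nra. repeat apply Rmult_lt_0_compat; auto. }
  exists d. split; auto. intros w Hw.
  assert (Hw1 : Cmod (w - z)%C < m / (2 * (K + 1))) by (eapply Rlt_le_trans; [exact Hw| apply Rmin_l]).
  assert (Hw2 : Cmod (w - z)%C < eps * (m * m * m) / (2 * (K * K) + 1)) by (eapply Rlt_le_trans; [exact Hw| apply Rmin_r]).
  pose proof (Cmod_ge_0 (w - z)%C) as Hwz0.
  assert (Hcw : m / 2 <= Cmod (c + k * w)%C).
  { pose proof (Cmod_lower (c + k * z)%C (k * (w - z))%C).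
    replace (c + k * z + k * (w - z))%C with (c + k * w)%C in H by ring.
    rewrite Cmod_mult in H. fold m K in H.
    assert (K * Cmod (w - z)%C <= m / 2).
    { apply Rmult_lt_compat_r with (r := 2 * (K + 1)) in Hw1; [|lra].
      unfold Rdiv in Hw1. rewrite Rmult_assoc, Rinv_l in Hw1 by lra. nra. }
    lra. }
  assert (Hnw : (c + k * w)%C <> RtoC 0) by (intro E; rewrite E, Cmod_0 in Hcw; lra).
  replace (Cinv (c + k * w) - Cinv (c + k * z) - (w - z) * (- k * Cinv ((c + k * z) * (c + k * z))))%C
    with ((k * (w - z)) * (k * (w - z)) * Cinv ((c + k * w) * ((c + k * z) * (c + k * z))))%C
    by (field; auto).
  rewrite !Cmod_mult, Cmod_inv by (repeat apply Cmult_neq_0; auto).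
  rewrite !Cmod_mult. fold m K.
  set (x := Cmod (w - z)%C) in *. set (y := Cmod (c + k * w)%C) in *.
  assert (Hy : 0 < y) by lra.
  apply Rle_trans with (K * x * (K * x) * / (m / 2 * (m * m))).
  { apply Rmult_le_compat_l; [pose proof (Rmult_le_pos _ _ HK0 Hwz0); nra|].
    apply Rinv_le_contravar. repeat apply Rmult_lt_0_compat; lra.
    apply Rmult_le_compat_r; [nra| lra]. }
  replace (K * x * (K * x) * / (m / 2 * (m * m))) with (x * (2 * (K * K) * x / (m * m * m))) by (field; lra).
  rewrite (Rmult_comm eps x). apply Rmult_le_compat_l; auto.
  apply Rmult_lt_compat_r with (r := 2 * (K * K) + 1) in Hw2; [|nra].
  unfold Rdiv in Hw2. rewrite Rmult_assoc, Rinv_l in Hw2 by nra.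
  assert (0 < m * m * m) by (repeat apply Rmult_lt_0_compat; auto).
  apply Rmult_le_reg_r with (m * m * m); auto. unfold Rdiv. rewrite Rmult_assoc, Rinv_l by lra.
  nra.
Qed.

Definition hh (t : R) (f : C -> C) : C -> C :=
  fun xi => Cdiv (f xi) (Cminus (RtoC 1) (Cmult (RtoC t) xi)).

Lemma denom_lower t w : 0 <= t <= 1 -> 1 - t * Cmod w <= Cmod (1 - RtoC t * w)%C.
Proof.
  intros Ht. pose proof (Cmod_lower (RtoC 1) (- (RtoC t * w))%C).
  rewrite Cmod_opp, Cmod_mult, !Cmod_RtoC in H by lra. exact H.
Qed.

Lemma denom_nz t w : 0 <= t <= 1 -> Cmod w < 1 -> (1 - RtoC t * w)%C <> RtoC 0.
Proof.
  intros Ht Hw E. pose proof (denom_lower t w Ht). rewrite E, Cmod_0 in H.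
  pose proof (Cmod_ge_0 w). nra.
Qed.

Lemma hh_holo t f : 0 <= t <= 1 -> holo_disc f -> holo (hh t f).
Proof.
  intros Ht Hf w Hw.
  destruct (holo_Cdiff f w Hf Hw) as [lf Hlf].
  assert (Hnz : (1 + (- RtoC t) * w)%C <> RtoC 0).
  { replace (1 + (- RtoC t) * w)%C with (1 - RtoC t * w)%C by ring. now apply denom_nz. }
  pose proof (Cdiff_inv_aff 1 (- RtoC t)%C w Hnz) as Hi.
  pose proof (Cdiff_mult _ _ _ _ _ Hlf Hi) as Hm.
  eexists. eapply (Cdiff_ext_loc _ _ _ _ 1); [lra| |exact Hm].
  intros x _. unfold hh, Cdiv. f_equal. f_equal. ring.
Qed.

Lemma hh_cont t f : 0 <= t <= 1 -> holo_disc f -> contD (hh t f).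
Proof. intros Ht Hf w Hw. apply holo_cont; auto. now apply hh_holo. Qed.

Lemma cesaro_int t f z : cesaro t f z = CInt (fun s => hh t f (RtoC s * z)%C) 0 1.
Proof.
  unfold cesaro. destruct (Req_EM_T (Cmod z) 0) as [E|E].
  - apply Cmod_eq_0 in E. subst z.
    rewrite (CInt_ext _ (fun _ => hh t f (RtoC 0)) 0 1).
    2:{ intros x _. f_equal. ring. }
    rewrite CInt_const. unfold hh. replace (RtoC (1 - 0)) with (RtoC 1) by (f_equal; ring).
    replace (RtoC 1 - RtoC t * RtoC 0)%C with (RtoC 1) by ring.
    unfold Cdiv. replace (Cinv (RtoC 1)) with (RtoC 1). ring.
    rewrite <- RtoC_inv by lra. f_equal. field.
  - assert (Hz : z <> RtoC 0) by (intro H; rewrite H, Cmod_0 in E; auto).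
    change (Cinv z * (z * CInt (fun s => hh t f (RtoC s * z)%C) 0 1) = CInt (fun s => hh t f (RtoC s * z)%C) 0 1)%C.
    field. exact Hz.
Qed.

Lemma cesaro_seg t f z : z <> RtoC 0 -> cesaro t f z = (Cinv z * seg (hh t f) 0 z)%C.
Proof.
  intros Hz. rewrite cesaro_int. unfold seg, segI.
  rewrite (CInt_ext (segf (hh t f) 0 z) (fun s => hh t f (RtoC s * z)%C) 0 1).
  2:{ intros x _. unfold segf. f_equal. ring. }
  field. exact Hz.
Qed.

Lemma CIok_ray h z : contD h -> Cmod z < 1 -> CIok (fun s => h (RtoC s * z)%C) 0 1.
Proof.
  intros Hh Hz. eapply CIok_ext; [|apply (CIok_segf h 0 z Hh); auto; rewrite Cmod_0; lra].
  intros x _. unfold segf. f_equal. ring.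
Qed.

Lemma cesaro_holo t f : 0 <= t <= 1 -> holo_disc f -> holo_disc (cesaro t f).
Proof.
  intros Ht Hf z Hz. unfold in_disc in Hz.
  assert (Hh := hh_holo t f Ht Hf). assert (Hc := hh_cont t f Ht Hf).
  destruct (Req_EM_T (Cmod z) 0) as [E|E].
  - apply Cmod_eq_0 in E. subst z.
    destruct (Hh (RtoC 0) Hz) as [lh Hlh].
    exists (RtoC (/2) * lh)%C. apply Cdiff_is_derive.
    intros eps Heps. destruct (Hlh (eps / 2)) as [d [Hd H1]]; [lra|].
    exists (Rmin d 1). split; [apply Rmin_pos; lra|]. intros w Hw.
    assert (Hw1 : Cmod (w - 0)%C < d) by (eapply Rlt_le_trans; [exact Hw| apply Rmin_l]).
    assert (Hw2 : Cmod (w - 0)%C < 1) by (eapply Rlt_le_trans; [exact Hw| apply Rmin_r]).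
    replace (w - 0)%C with w in * by ring.
    rewrite !cesaro_int.
    assert (Ok1 := CIok_ray _ w Hc Hw2).
    assert (Ok0 : CIok (fun s => hh t f (RtoC s * RtoC 0)%C) 0 1).
    { eapply CIok_ext; [|apply (CIok_const (hh t f (RtoC 0)))]. intros x _. simpl. f_equal. ring. }
    assert (OkA : CIok (fun s => 0 + RtoC s * (w * lh))%C 0 1).
    { eapply CIok_ext; [|apply (CIok_plus _ _ _ _ (CIok_const (RtoC 0) 0 1) (CIok_cmul (w * lh)%C _ _ _ CIok_id))].
      intros x _. simpl. ring. }
    replace (w * (RtoC (/ 2) * lh))%C with (CInt (fun s => 0 + RtoC s * (w * lh))%C 0 1)
      by (rewrite CInt_affine; ring).
    rewrite <- (CInt_minus _ _ _ _ Ok1 Ok0).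
    rewrite <- (CInt_minus _ _ _ _ (CIok_minus _ _ _ _ Ok1 Ok0) OkA).
    replace (eps * Cmod w) with (2 * ((1 - 0) * (eps / 2 * Cmod w))) by field.
    apply CInt_bound; [lra| apply CIok_minus; [apply CIok_minus|]; auto |].
    intros s Hs.
    replace (hh t f (RtoC s * w) - hh t f (RtoC s * RtoC 0) - (0 + RtoC s * (w * lh)))%C
      with (hh t f (RtoC s * w - 0) - hh t f (RtoC 0) - (RtoC s * w - 0) * lh)%C.
    2:{ f_equal; [f_equal; f_equal; ring|ring]. }
    assert (Hsw : Cmod (RtoC s * w - 0)%C <= Cmod w).
    { replace (RtoC s * w - 0)%C with (RtoC s * w)%C by ring. rewrite Cmod_mult, Cmod_RtoC by lra.
      pose proof (Cmod_ge_0 w). nra. }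
    replace (RtoC s * w - 0)%C with (RtoC s * w)%C in * by ring.
    eapply Rle_trans. 
    { assert (Hx := H1 (RtoC s * w)%C). replace (RtoC s * w - 0)%C with (RtoC s * w)%C in Hx by ring.
      apply Hx. lra. }
    pose proof (Cmod_ge_0 (RtoC s * w)%C). nra.
  - assert (Hz0 : z <> RtoC 0) by (intro H; rewrite H, Cmod_0 in E; auto).
    pose proof (prim_deriv _ z Hh Hz) as Hp.
    assert (Hnz : (0 + 1 * z)%C <> RtoC 0) by (replace (0 + 1 * z)%C with z by ring; auto).
    pose proof (Cdiff_inv_aff 0 1 z Hnz) as Hi.
    pose proof (Cdiff_mult _ _ _ _ _ Hi Hp) as Hm.
    pose proof (Cmod_ge_0 z).
    eexists. apply Cdiff_is_derive.
    eapply (Cdiff_ext_loc _ _ _ _ (Rmin (Cmod z) (1 - Cmod z))); [apply Rmin_pos; lra| |exact Hm].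
    intros w Hw.
    assert (Hw1 : Cmod (w - z)%C < Cmod z) by (eapply Rlt_le_trans; [exact Hw| apply Rmin_l]).
    assert (Hw0 : w <> RtoC 0).
    { intro H0. rewrite H0 in Hw1. replace (0 - z)%C with (- z)%C in Hw1 by ring.
      rewrite Cmod_opp in Hw1. lra. }
    rewrite cesaro_seg by auto. f_equal. f_equal. ring.
Qed.

Lemma CInt_norm_le g : CIok g 0 1 -> ex_RInt (fun s => Cmod (g s)) 0 1 ->
  Cmod (CInt g 0 1) <= RInt (fun s => Cmod (g s)) 0 1.
Proof.
  intros [H1 H2] H3.
  set (I := CInt g 0 1). set (R0 := RInt (fun s => Cmod (g s)) 0 1).
  assert (HR0 : 0 <= R0) by (apply RInt_ge_0; [lra|auto|intros; apply Cmod_ge_0]).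
  pose proof (Cmod_ge_0 I) as HI.
  destruct (Req_dec (Cmod I) 0) as [E|E]; [lra|].
  assert (HA : RInt (fun s => Re (g s)) 0 1 = Re I) by reflexivity.
  assert (HB : RInt (fun s => Im (g s)) 0 1 = Im I) by reflexivity.
  assert (Hex : ex_RInt (fun s => Re I * Re (g s) + Im I * Im (g s)) 0 1).
  { apply (ex_RInt_plus (V:=R_CompleteNormedModule) (fun s => scal (Re I) (Re (g s))) (fun s => scal (Im I) (Im (g s))));
    apply (ex_RInt_scal (V:=R_CompleteNormedModule)); auto. }
  assert (Key : RInt (fun s => Re I * Re (g s) + Im I * Im (g s)) 0 1 = Cmod I * Cmod I).
  { rewrite (RInt_plus (V:=R_CompleteNormedModule) (fun s => scal (Re I) (Re (g s))) (fun s => scal (Im I) (Im (g s))))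
      by (apply (ex_RInt_scal (V:=R_CompleteNormedModule)); auto).
    rewrite !(RInt_scal (V:=R_CompleteNormedModule)) by auto.
    rewrite HA, HB. pose proof (Cmod2_alt I). unfold scal, plus; simpl; unfold mult; simpl. nra. }
  assert (Le : RInt (fun s => Re I * Re (g s) + Im I * Im (g s)) 0 1 <= RInt (fun s => scal (Cmod I) (Cmod (g s))) 0 1).
  { apply RInt_le; auto; [lra| apply (ex_RInt_scal (V:=R_CompleteNormedModule)); auto|].
    intros x _. unfold scal; simpl; unfold mult; simpl.
    rewrite <- (Cmod_conj I), <- Cmod_mult.
    eapply Rle_trans; [|apply re_le_Cmod]. eapply Rle_trans; [|apply Rle_abs].
    rewrite re_mult, re_conj, im_conj. rewrite ?HA, ?HB. lra. }
  rewrite (RInt_scal (V:=R_CompleteNormedModule)) in Le by auto.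
  rewrite Key in Le. fold R0 in Le. unfold scal in Le; simpl in Le; unfold mult in Le; simpl in Le.
  nra.
Qed.

Definition Kt (t : R) : R := RInt (fun s => / (1 - t * s)) 0 1.

Lemma Kt_ex t : 0 <= t < 1 -> ex_RInt (fun s => / (1 - t * s)) 0 1.
Proof.
  intros Ht. apply (ex_RInt_continuous (V:=R_CompleteNormedModule)).
  rewrite Rmin_left, Rmax_right by lra. intros z Hz.
  assert (D : ex_derive (fun s => / (1 - t * s)) z) by (auto_derive; nra).
  exact (ex_derive_continuous (K:=R_AbsRing) (V:=R_NormedModule) _ _ D).
Qed.

Lemma Kt_ge1 t : 0 <= t < 1 -> 1 <= Kt t.
Proof.
  intros Ht. unfold Kt.
  replace 1 with (RInt (fun _ => 1) 0 1) at 1.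
  2:{ rewrite (RInt_const (V:=R_CompleteNormedModule)). unfold scal; simpl; unfold mult; simpl. ring. }
  apply RInt_le; [lra| apply (ex_RInt_const (V:=R_CompleteNormedModule)) | apply Kt_ex; auto |].
  intros x Hx. rewrite <- Rinv_1 at 1. apply Rinv_le_contravar; nra.
Qed.

Lemma Kt0 : Kt 0 = 1.
Proof.
  unfold Kt. rewrite (RInt_ext _ (fun _ => 1)).
  2:{ intros. rewrite Rmult_0_l, Rminus_0_r, Rinv_1. reflexivity. }
  rewrite (RInt_const (V:=R_CompleteNormedModule)). unfold scal; simpl; unfold mult; simpl. ring.
Qed.

Lemma Kt_val t : 0 < t < 1 -> Kt t = - ln (1 - t) / t.
Proof.
  intros Ht. unfold Kt. apply is_RInt_unique.
  assert (H := is_RInt_derive (V:=R_CompleteNormedModule) (fun s => - ln (1 - t * s) / t) (fun s => / (1 - t * s)) 0 1).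
  replace (- ln (1 - t) / t) with (@minus R_AbelianGroup ((fun s => - ln (1 - t * s) / t) 1) ((fun s => - ln (1 - t * s) / t) 0)).
  2:{ unfold minus, plus, opp; simpl. rewrite Rmult_0_r, Rminus_0_r, ln_1, Rmult_1_r. field. lra. }
  apply H.
  - rewrite Rmin_left, Rmax_right by lra. intros x Hx. auto_derive; [nra|]. field. split; nra.
  - rewrite Rmin_left, Rmax_right by lra. intros x Hx.
    assert (D : ex_derive (fun s => / (1 - t * s)) x) by (auto_derive; nra).
    exact (ex_derive_continuous (K:=R_AbsRing) (V:=R_NormedModule) _ _ D).
Qed.

Lemma cesaro_bound v t u B z : is_weight v -> 0 <= t < 1 -> contD (hh t u) ->
  (forall w, in_disc w -> Cmod (u w) * v (Cmod w) <= B) -> in_disc z ->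
  Cmod (cesaro t u z) * v (Cmod z) <= B * Kt t.
Proof.
  intros [Hvp [Hvm _]] Ht Hc HB Hz. unfold in_disc in *.
  rewrite cesaro_int.
  set (g := fun s => hh t u (RtoC s * z)%C).
  assert (Ok : CIok g 0 1) by (apply CIok_ray; auto).
  assert (Ex : ex_RInt (fun s => Cmod (g s)) 0 1).
  { eapply ex_RInt_ext; [|apply (exRInt_Cmod_of_Rcont (segf (hh t u) 0 z)); [lra|]].
    - intros x _. unfold g, segf. f_equal. f_equal. ring.
    - intros s Hs. apply Rcont_seg. apply Hc. apply Cmod_convex_lt; auto. rewrite Cmod_0; lra. }
  pose proof (Cmod_ge_0 z) as Hz0.
  assert (Hvz : 0 < v (Cmod z)) by (apply Hvp; lra).
  set (c := B / v (Cmod z)).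
  assert (Hpt : forall s, 0 <= s <= 1 -> Cmod (g s) <= c * / (1 - t * s)).
  { intros s Hs. unfold g, hh.
    assert (Hsz : Cmod (RtoC s * z)%C = s * Cmod z) by (rewrite Cmod_mult, Cmod_RtoC; lra).
    assert (Hsz1 : Cmod (RtoC s * z)%C < 1) by (rewrite Hsz; nra).
    assert (Hden := denom_lower t (RtoC s * z)%C ltac:(lra)). rewrite Hsz in Hden.
    assert (Hnz := denom_nz t (RtoC s * z)%C ltac:(lra) Hsz1).
    rewrite Cmod_div by exact Hnz.
    assert (Hu : Cmod (u (RtoC s * z)%C) * v (Cmod z) <= B).
    { eapply Rle_trans; [|apply (HB _ Hsz1)]. apply Rmult_le_compat_l; [apply Cmod_ge_0|].
      rewrite Hsz. apply Hvm; nra. }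
    assert (Hu' : Cmod (u (RtoC s * z)%C) <= c).
    { unfold c. apply Rmult_le_reg_r with (v (Cmod z)); auto. unfold Rdiv.
      rewrite Rmult_assoc, Rinv_l by lra. lra. }
    pose proof (Cmod_ge_0 (u (RtoC s * z)%C)).
    assert (0 < 1 - t * s) by nra.
    assert (Hts : t * (s * Cmod z) <= t * s).
    { apply Rmult_le_compat_l; [lra|]. rewrite <- (Rmult_1_r s) at 2. apply Rmult_le_compat_l; lra. }
    assert (Hd : 1 - t * s <= Cmod (1 - RtoC t * (RtoC s * z))%C) by lra.
    unfold Rdiv. apply Rmult_le_compat; try lra.
    - left. apply Rinv_0_lt_compat. lra.
    - apply Rinv_le_contravar; lra. }
  assert (Hle : RInt (fun s => Cmod (g s)) 0 1 <= RInt (fun s => scal c (/ (1 - t * s))) 0 1).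
  { apply RInt_le; [lra|auto| apply (ex_RInt_scal (V:=R_CompleteNormedModule)); apply Kt_ex; auto|].
    intros x Hx. apply Hpt. lra. }
  rewrite (RInt_scal (V:=R_CompleteNormedModule)) in Hle by (apply Kt_ex; auto).
  fold (Kt t) in Hle. unfold scal in Hle; simpl in Hle; unfold mult in Hle; simpl in Hle.
  pose proof (CInt_norm_le g Ok Ex).
  apply Rle_trans with (c * Kt t * v (Cmod z)).
  { apply Rmult_le_compat_r; lra. }
  unfold c. right. field. lra.
Qed.

Lemma lub_fin (E : R -> Prop) x0 M : E x0 -> (forall x, E x -> x <= M) ->
  exists N, Lub_Rbar E = Finite N /\ (forall x, E x -> x <= N) /\ N <= M.
Proof.
  intros H0 HM. destruct (Lub_Rbar_correct E) as [Hub Hlub].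
  assert (H1 : Rbar_le (Lub_Rbar E) M) by (apply Hlub; intros x Hx; simpl; apply HM; auto).
  assert (H2 := Hub x0 H0).
  destruct (Lub_Rbar E) as [N| |]; simpl in *; try contradiction.
  exists N. split; [reflexivity|]. split; [intros x Hx; exact (Hub x Hx)| exact H1].
Qed.

Lemma normv_spec v f M : is_weight v -> (forall z, in_disc z -> Cmod (f z) * v (Cmod z) <= M) ->
  (forall z, in_disc z -> Cmod (f z) * v (Cmod z) <= normv v f) /\ normv v f <= M.
Proof.
  intros Hv HM.
  assert (H0 : in_disc (RtoC 0)) by (unfold in_disc; rewrite Cmod_0; lra).
  destruct (lub_fin (fun x => exists z, in_disc z /\ x = Cmod (f z) * v (Cmod z))
              (Cmod (f (RtoC 0)) * v (Cmod (RtoC 0))) M) as [N [EN [HN1 HN2]]].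
  - exists (RtoC 0). auto.
  - intros x [z [Hz ->]]. auto.
  - unfold normv. rewrite EN. simpl. split; auto. intros z Hz. apply HN1. exists z; auto.
Qed.

Lemma normv_nonneg v f M : is_weight v -> (forall z, in_disc z -> Cmod (f z) * v (Cmod z) <= M) ->
  0 <= normv v f.
Proof.
  intros Hv HM. destruct (normv_spec v f M Hv HM) as [H _].
  assert (H0 : in_disc (RtoC 0)) by (unfold in_disc; rewrite Cmod_0; lra).
  specialize (H _ H0). destruct Hv as [Hvp _].
  pose proof (Cmod_ge_0 (f (RtoC 0))). assert (0 < v (Cmod (RtoC 0))) by (apply Hvp; rewrite Cmod_0; lra).
  nra.
Qed.

Lemma Ccont_minus f g z : Ccont f z -> Ccont g z -> Ccont (fun x => f x - g x)%C z.
Proof.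
  intros Hf Hg eps Heps.
  destruct (Hf (eps / 2)) as [d1 [Hd1 H1]]; [lra|].
  destruct (Hg (eps / 2)) as [d2 [Hd2 H2]]; [lra|].
  exists (Rmin d1 d2). split; [apply Rmin_pos; auto|]. intros w Hw.
  assert (Hw1 : Cmod (w - z)%C < d1) by (eapply Rlt_le_trans; [exact Hw| apply Rmin_l]).
  assert (Hw2 : Cmod (w - z)%C < d2) by (eapply Rlt_le_trans; [exact Hw| apply Rmin_r]).
  replace (f w - g w - (f z - g z))%C with ((f w - f z) + - (g w - g z))%C by ring.
  eapply Rle_lt_trans; [apply Cmod_triangle|]. rewrite Cmod_opp.
  specialize (H1 w Hw1). specialize (H2 w Hw2). lra.
Qed.

Lemma Ccont_ext F G z : (forall x, F x = G x) -> Ccont F z -> Ccont G z.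
Proof.
  intros E H eps Heps. destruct (H eps Heps) as [d [Hd H1]]. exists d. split; auto.
  intros w Hw. rewrite <- !E. auto.
Qed.

Lemma cesaro_minus t f g z : 0 <= t <= 1 -> holo_disc f -> holo_disc g -> in_disc z ->
  Cminus (cesaro t g z) (cesaro t f z) = cesaro t (fun z => Cminus (g z) (f z)) z.
Proof.
  intros Ht Hf Hg Hz. rewrite !cesaro_int.
  rewrite <- CInt_minus by (apply CIok_ray; [apply hh_cont|]; auto).
  apply CInt_ext. intros x _. unfold hh, Cdiv. ring.
Qed.

Theorem proposition2p4 (v : R -> R) (hv : is_weight v) :
  (forall t, 0 <= t < 1 ->
     (forall f, in_Hv v f -> in_Hv v (cesaro t f)) /\
     (forall f, in_Hv v f -> forall eps, 0 < eps -> exists delta, 0 < delta /\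
        forall g, in_Hv v g ->
          normv v (fun z => Cminus (g z) (f z)) < delta ->
          normv v (fun z => Cminus (cesaro t g z) (cesaro t f z)) < eps)) /\
  cesaro_opnorm v 0 = Finite 1 /\
  (forall t, 0 < t < 1 ->
     exists N, cesaro_opnorm v t = Finite N /\
       1 <= N /\ N <= - ln (1 - t) / t).
Proof.
  assert (H0d : in_disc (RtoC 0)) by (unfold in_disc; rewrite Cmod_0; lra).
  assert (Part1 : forall t, 0 <= t < 1 -> forall f, in_Hv v f -> in_Hv v (cesaro t f)).
  { intros t Ht f [Hf [M HM]]. split.
    - apply cesaro_holo; auto. lra.
    - exists (M * Kt t). intros z Hz. apply cesaro_bound; auto. apply hh_cont; auto. lra. }
  assert (Bnd : forall t, 0 <= t < 1 -> forall f, in_Hv v f -> normv v (cesaro t f) <= normv v f * Kt t).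
  { intros t Ht f [Hf [M HM]].
    destruct (normv_spec v f M hv HM) as [Hub _].
    apply (normv_spec v (cesaro t f) (normv v f * Kt t) hv).
    intros z Hz. apply cesaro_bound; auto. apply hh_cont; auto. lra. }
  assert (Opn : forall t, 0 <= t < 1 -> exists N, cesaro_opnorm v t = Finite N /\ 1 <= N /\ N <= Kt t).
  { intros t Ht.
    pose proof hv as [Hvp [Hvm _]].
    assert (Hv0 : 0 < v 0) by (apply Hvp; lra).
    set (c := / v 0).
    assert (Hc : 0 < c) by (unfold c; apply Rinv_0_lt_compat; auto).
    set (f0 := fun _ : C => RtoC c).
    assert (Hf0b : forall z, in_disc z -> Cmod (f0 z) * v (Cmod z) <= 1).
    { intros z Hz. unfold f0. rewrite Cmod_RtoC by lra. unfold in_disc in Hz.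
      pose proof (Cmod_ge_0 z). assert (v (Cmod z) <= v 0) by (apply Hvm; lra).
      unfold c. apply Rmult_le_reg_l with (v 0); auto. rewrite <- Rmult_assoc, Rinv_r by lra. lra. }
    assert (Hf0 : in_Hv v f0).
    { split. - intros z _. eexists. apply is_derive_const. - exists 1. exact Hf0b. }
    destruct (Part1 t Ht f0 Hf0) as [_ [M0 HM0]].
    destruct (normv_spec v (cesaro t f0) M0 hv HM0) as [Hub0 _].
    assert (Hx0 : 1 <= normv v (cesaro t f0)).
    { eapply Rle_trans; [|apply (Hub0 _ H0d)].
      assert (E : cesaro t f0 (RtoC 0) = RtoC c).
      { unfold cesaro. rewrite Cmod_0. destruct (Req_EM_T 0 0); [reflexivity| congruence]. }
      rewrite E, Cmod_0, Cmod_RtoC by lra. unfold c. rewrite Rinv_l by lra. lra. }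
    pose proof (Kt_ge1 t Ht).
    destruct (lub_fin (fun x => exists f, in_Hv v f /\ normv v f <= 1 /\ x = normv v (cesaro t f))
               (normv v (cesaro t f0)) (Kt t)) as [N [EN [HN1 HN2]]].
    - exists f0. split; [exact Hf0|]. split; [apply (normv_spec v f0 1 hv Hf0b)|reflexivity].
    - intros x [f [Hf [Hn ->]]]. eapply Rle_trans; [apply Bnd; auto|].
      assert (0 <= normv v f).
      { destruct Hf as [_ [M HM]]. eapply normv_nonneg; eauto. }
      nra.
    - exists N. unfold cesaro_opnorm. rewrite EN. split; auto. split; auto.
      eapply Rle_trans; [exact Hx0|]. apply HN1. exists f0.
      split; [exact Hf0|]. split; [apply (normv_spec v f0 1 hv Hf0b)|reflexivity]. }
  split; [|split].
  - intros t Ht. split; [apply Part1; auto|].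
    intros f Hf eps Heps.
    pose proof (Kt_ge1 t Ht) as HK.
    exists (eps / Kt t). split; [apply Rdiv_lt_0_compat; lra|].
    intros g Hg Hd.
    destruct Hf as [Hfh [Mf HMf]]. destruct Hg as [Hgh [Mg HMg]].
    set (u := fun z => Cminus (g z) (f z)).
    assert (Hub : forall z, in_disc z -> Cmod (u z) * v (Cmod z) <= Mg + Mf).
    { intros z Hz. unfold u. pose proof (Cmod_triangle (g z) (- f z)%C). rewrite Cmod_opp in H.
      pose proof hv as [Hvp _]. assert (0 < v (Cmod z)) by (apply Hvp; split; [apply Cmod_ge_0| exact Hz]).
      specialize (HMf z Hz). specialize (HMg z Hz). unfold Cminus. nra. }
    destruct (normv_spec v u _ hv Hub) as [Hu _].
    assert (Hcu : contD (hh t u)).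
    { intros w Hw. apply (Ccont_ext (fun x => hh t g x - hh t f x)%C).
      - intros x. unfold hh, u, Cdiv. ring.
      - apply Ccont_minus; apply hh_cont; auto; lra. }
    assert (Hbd : normv v (fun z => Cminus (cesaro t g z) (cesaro t f z)) <= normv v u * Kt t).
    { apply (normv_spec v _ (normv v u * Kt t) hv).
      intros z Hz. rewrite (cesaro_minus t f g z) by (auto; lra).
      apply cesaro_bound; auto. }
    fold u in Hd.
    apply Rle_lt_trans with (1 := Hbd).
    apply Rmult_lt_compat_r with (r := Kt t) in Hd; [|lra].
    unfold Rdiv in Hd. rewrite Rmult_assoc, Rinv_l in Hd by lra. lra.
  - destruct (Opn 0 ltac:(lra)) as [N [EN [H1 H2]]]. rewrite Kt0 in H2.
    rewrite EN. f_equal. lra.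
  - intros t Ht. destruct (Opn t ltac:(lra)) as [N [EN [H1 H2]]].
    exists N. rewrite <- Kt_val by auto. auto.
Qed.
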